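(* Let $L$ be an $\mathbb{M}$-compositional family of lattice-closed logics. The class of all $L$-definable $\mathbb{M}$-algebras is a pseudo-variety.
   Context: Fix a set $\Xi$ of sorts; $\mathsf{Pos}^\Xi$: $\Xi$-sorted families of partial orders with sort-wise monotone maps. $\mathbb{M}$ is a monad on $\mathsf{Pos}^\Xi$ ($\mathrm{flat},\mathrm{sing}$) preserving injective, surjective, bijective functions and preimages and using the standard ordering. $\mathbb{M}$-algebras $\langle A,\pi\rangle$: $\pi\circ\mathbb{M}\pi=\pi\circ\mathrm{flat}$, $\pi\circ\mathrm{sing}=\mathrm{id}$. Finitary: sort-wise finite and finitely generated. A preorder $\sqsubseteq$ containing the order is a congruence ordering if $\mathbb{M}q(s)\leq\mathbb{M}q(t)\Rightarrow\pi(s)\sqsubseteq\pi(t)$, $q$ the quotient map onto the ordered set of classes. Quotient of $\mathfrak{B}$: codomain of a surjective morphism from $\mathfrak{B}$. For $\Delta\subseteq\Xi$: $A|_\Delta$ the part with sorts in $\Delta$, $\mathbb{M}|_\Delta A:=(\mathbb{M}(A|_\Delta))|_\Delta$, $\mathfrak{A}|_\Delta$ the $\mathbb{M}|_\Delta$-algebra with restricted product. $\mathfrak{B}$ is a sort-accumulation point of $\mathcal{A}$ if for every finite $\Delta\subseteq\Xi$ there is $\mathfrak{A}\in\mathcal{A}$ with $\mathfrak{B}|_\Delta$ a quotient of $\mathfrak{A}|_\Delta$. A pseudo-variety is a class of finitary algebras closed under quotients, finitary subalgebras of finite products and sort-accumulation points. Alphabet: finite unordered $\Sigma$. A logic: $\Xi$-sorted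 formulae and models with satisfaction; lattice closed if definable classes of each sort are closed under finite unions and intersections; for a set $\Delta$ of formulae, $M\sqsubseteq_\Delta N$ iff every formula of $\Delta$ true in $M$ is true in $N$. A family of logics $L$ assigns to each alphabet $\Sigma$ a logic $L[\Sigma]$ with models $\mathbb{M}\Sigma$, and to $f:\Sigma\to\Gamma$ a sort-preserving $\lambda_f:L[\Gamma]\to L[\Sigma]$ with $s\models\lambda_f(\varphi)\iff\mathbb{M}f(s)\models\varphi$. $K\subseteq\mathbb{M}_\xi\Sigma$ is $L$-definable if $K=\{s:s\models\varphi\}$ for some $\varphi\in L_\xi[\Sigma]$; for a finite ordered $C$, $K\subseteq\mathbb{M}C$ is $L$-definable if its preimage under $\mathbb{M}\iota$ ($\iota$ the identity from $C$ with trivial order to $C$) is. $L$ is $\mathbb{M}$-compositional if for every finite subfamily $\Phi\subseteq L$ (each $\Phi[\Sigma]$ finite) there is a subfamily $\Delta\supseteq\Phi$ with each $\Delta[\Sigma]$ finite in each sort (up to equivalence) such that $\sqsubseteq_{\Delta[\Sigma]}$ is a congruence ordering on $\mathbb{M}\Sigma$ for all $\Sigma$. A finite $C\subseteq A$ is $L$-definably embedded if $\pi^{-1}(\uparrow a)\cap\mathbb{M}C$ is $L$-definable for every $a\in A$; $\mathfrak{A}$ is $L$-definable if finitary and all its finite subsets are $L$-definably embedded. *)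

(* Defs.v *)
From Stdlib Require Import List FunctionalExtensionality PropExtensionality
  ProofIrrelevance.
Import ListNotations.

Set Implicit Arguments.
Unset Strict Implicit.

Record SPos (Xi : Type) := {
  car :> Type;
  srt : car -> Xi;
  le : car -> car -> Prop;
  le_refl : forall x, le x x;
  le_trans : forall x y z, le x y -> le y z -> le x z;
  le_antisym : forall x y, le x y -> le y x -> x = y;
  le_srt : forall x y, le x y -> srt x = srt y
}.
Arguments srt {Xi} s _.
Arguments le {Xi} s _ _.

Record Hom (Xi : Type) (A B : SPos Xi) := {
  hfun :> A -> B;
  hsrt : forall x, srt B (hfun x) = srt A x;
  hmono : forall x y, le A x y -> le B (hfun x) (hfun y)
}.

Definition idH (Xi : Type) (A : SPos Xi) : Hom A A.
Proof. refine {| hfun := fun x => x |}; auto. Defined.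

Definition compH (Xi : Type) (A B C : SPos Xi) (g : Hom B C) (f : Hom A B)
  : Hom A C.
Proof.
  refine {| hfun := fun x => g (f x) |}.
  - intro x; rewrite (hsrt g), (hsrt f); reflexivity.
  - intros x y H; apply (hmono g), (hmono f), H.
Defined.

Definition injective {X Y : Type} (f : X -> Y) := forall x y, f x = f y -> x = y.
Definition surjective {X Y : Type} (f : X -> Y) := forall y, exists x, f x = y.

Definition subS (Xi : Type) (A : SPos Xi) (P : A -> Prop) : SPos Xi.
Proof.
  refine {| car := {x : A | P x};
            srt := fun x => srt A (proj1_sig x);
            le := fun x y => le A (proj1_sig x) (proj1_sig y) |}.
  - intros; apply le_refl.
  - intros x y z; apply le_trans.
  - intros [x px] [y py] H1 H2; simpl in *.
    assert (x = y) by (apply le_antisym; auto). subst y.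
    f_equal; apply proof_irrelevance.
  - intros x y; apply le_srt.
Defined.

Definition incl (Xi : Type) (A : SPos Xi) (P : A -> Prop) : Hom (subS P) A.
Proof. refine {| hfun := fun x : subS P => proj1_sig x |}; auto. Defined.

(** The relation <= of A as a sorted set of pairs (sort of the pair = sort
    of its first component), carrying the trivial (discrete) order. *)
Definition relS (Xi : Type) (A : SPos Xi) : SPos Xi.
Proof.
  refine {| car := {p : A * A | le A (fst p) (snd p)};
            srt := fun p => srt A (fst (proj1_sig p));
            le := fun p q => p = q |}; intros; subst; auto.
Defined.

Definition relp0 (Xi : Type) (A : SPos Xi) : Hom (relS A) A.
Proof.
  refine {| hfun := fun p : relS A => fst (proj1_sig p) |}; simpl; intros; subst;
    auto using le_refl.
Defined.

Definition relp1 (Xi : Type) (A : SPos Xi) : Hom (relS A) A.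
Proof.
  refine {| hfun := fun p : relS A => snd (proj1_sig p) |}; simpl.
  - intros [[a b] H]; simpl; symmetry; apply le_srt, H.
  - intros; subst; apply le_refl.
Defined.

Definition prodS (Xi I : Type) (F : I -> SPos Xi) : SPos Xi.
Proof.
  refine {| car := {p : Xi * (forall i, F i) | forall i, srt (F i) (snd p i) = fst p};
            srt := fun p => fst (proj1_sig p);
            le := fun p q => fst (proj1_sig p) = fst (proj1_sig q) /\
                    forall i, le (F i) (snd (proj1_sig p) i) (snd (proj1_sig q) i) |}.
  - intros; split; auto using le_refl.
  - intros x y z [H1 H2] [H3 H4]; split; [congruence|].
    intro i; eapply le_trans; eauto.
  - intros [[a f] pf] [[b g] pg] [H1 H2] [H3 H4]; simpl in *. subst b.
    assert (f = g).
    { apply functional_extensionality_dep; intro i; apply le_antisym; auto. }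
    subst g. f_equal; apply proof_irrelevance.
  - intros x y [H _]; exact H.
Defined.

Definition projS (Xi I : Type) (F : I -> SPos Xi) (i : I) : Hom (prodS F) (F i).
Proof.
  refine {| hfun := fun p : prodS F => snd (proj1_sig p) i |}.
  - intros [p H]; apply H.
  - intros x y [_ H]; apply H.
Defined.

Record Monad (Xi : Type) := {
  M : SPos Xi -> SPos Xi;
  Mmap : forall A B : SPos Xi, Hom A B -> Hom (M A) (M B);
  sing : forall A, Hom A (M A);
  flat : forall A, Hom (M (M A)) (M A);
  Mmap_id : forall A (s : M A), Mmap (idH A) s = s;
  Mmap_comp : forall A B C (g : Hom B C) (f : Hom A B) (s : M A),
      Mmap (compH g f) s = Mmap g (Mmap f s);
  sing_nat : forall A B (f : Hom A B) (a : A), sing B (f a) = Mmap f (sing A a);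
  flat_nat : forall A B (f : Hom A B) (u : M (M A)),
      flat B (Mmap (Mmap f) u) = Mmap f (flat A u);
  flat_sing : forall A (s : M A), flat A (sing (M A) s) = s;
  flat_Msing : forall A (s : M A), flat A (Mmap (sing A) s) = s;
  flat_flat : forall A (w : M (M (M A))),
      flat A (flat (M A) w) = flat A (Mmap (flat A) w);
  Mmap_inj : forall A B (f : Hom A B), injective f -> injective (Mmap f);
  Mmap_surj : forall A B (f : Hom A B), surjective f -> surjective (Mmap f);
  Mmap_bij : forall A B (f : Hom A B),
      injective f /\ surjective f -> injective (Mmap f) /\ surjective (Mmap f);
  (* M preserves preimages: M(f^-1[C]) = (Mf)^-1[MC] *)
  Mmap_preim : forall A B (f : Hom A B) (P : B -> Prop) (s : M A),
      (exists t : M (subS P), Mmap (incl P) t = Mmap f s) ->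
      exists u : M (subS (fun a => P (f a))), Mmap (incl _) u = s;
  M_std_order : forall A (s t : M A),
      le (M A) s t <->
      exists u : M (relS A), Mmap (relp0 A) u = s /\ Mmap (relp1 A) u = t
}.
Arguments M {Xi} m _.
Arguments Mmap {Xi} m {A B} _.
Arguments sing {Xi} m A.
Arguments flat {Xi} m A.

Section Algebras.
Variable Xi : Type.
Variable Mo : Monad Xi.

Record Alg := {
  acar : SPos Xi;
  api : Hom (M Mo acar) acar;
  alg_assoc : forall s : M Mo (M Mo acar), api (Mmap Mo api s) = api (flat Mo acar s);
  alg_unit : forall a : acar, api (sing Mo acar a) = a
}.

Definition is_alg_morph (A B : Alg) (h : Hom (acar A) (acar B)) :=
  forall s : M Mo (acar A), h (api A s) = api B (Mmap Mo h s).

Definition finite_pred (T : Type) (P : T -> Prop) := exists l : list T, forall x, P x -> In x l.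

(** finitary = sort-wise finite and finitely generated *)
Definition finitary (A : Alg) :=
  (forall xi : Xi, finite_pred (fun a : acar A => srt (acar A) a = xi)) /\
  exists C : list (acar A), forall a : acar A,
    exists s : M Mo (subS (fun x => In x C)), api A (Mmap Mo (incl _) s) = a.

Definition quotient_of (B A : Alg) :=
  exists h : Hom (acar A) (acar B), is_alg_morph h /\ surjective h.

Definition prod_pi (I : Type) (A : I -> Alg) (s : M Mo (prodS (fun i => acar (A i))))
  : prodS (fun i => acar (A i)).
Proof.
  exists (srt _ s, fun i => api (A i) (Mmap Mo (projS (fun i => acar (A i)) i) s)).
  intro i; simpl. rewrite (hsrt (api (A i))), (hsrt (Mmap Mo _)). reflexivity.
Defined.

Definition embeds_in_product (B : Alg) (I : Type) (A : I -> Alg) :=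
  exists h : Hom (acar B) (prodS (fun i => acar (A i))),
    (forall s : M Mo (acar B), h (api B s) = @prod_pi I A (Mmap Mo h s)) /\
    injective h /\
    (forall x y, le _ (h x) (h y) -> le (acar B) x y).

(** Restriction to a set Delta of sorts: A|_Delta, with M|_Delta A :=
    (M(A|_Delta))|_Delta and the restricted product. *)
Definition restrS (A : SPos Xi) (D : Xi -> Prop) := subS (fun a : A => D (srt A a)).

Definition restr_quotient_of (D : Xi -> Prop) (B A : Alg) :=
  exists h : Hom (restrS (acar A) D) (restrS (acar B) D),
    surjective h /\
    forall (s : M Mo (restrS (acar A) D)), D (srt _ s) ->
      forall x : restrS (acar A) D,
        proj1_sig x = api A (Mmap Mo (incl _) s) ->
        proj1_sig (h x) = api B (Mmap Mo (incl _) (Mmap Mo h s)).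

Definition sort_accumulation_point (B : Alg) (K : Alg -> Prop) :=
  forall D : Xi -> Prop, finite_pred D ->
    exists A : Alg, K A /\ restr_quotient_of D B A.

Definition pseudo_variety (K : Alg -> Prop) :=
  (forall A, K A -> finitary A) /\
  (forall A B, K A -> quotient_of B A -> K B) /\
  (forall (B : Alg) (n : nat) (A : {i : nat | i < n} -> Alg),
      (forall i, K (A i)) -> embeds_in_product B A -> finitary B -> K B) /\
  (forall B : Alg, finitary B -> sort_accumulation_point B K -> K B).

Record preorder_on (A : SPos Xi) (R : A -> A -> Prop) : Prop := {
  po_refl : forall x, R x x;
  po_trans : forall x y z, R x y -> R y z -> R x z;
  po_srt : forall x y, R x y -> srt A x = srt A y;
  po_le : forall x y, le A x y -> R x y
}.

Definition cls (A : SPos Xi) (R : A -> A -> Prop) (a : A) : A -> Prop :=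
  fun b => R a b /\ R b a.

Lemma sig_eq (T : Type) (P : T -> Prop) (p q : {x : T | P x}) :
  proj1_sig p = proj1_sig q -> p = q.
Proof.
  destruct p as [x px], q as [y py]; simpl; intro E; subst y.
  f_equal; apply proof_irrelevance.
Qed.

Lemma cls_eq (A : SPos Xi) (R : A -> A -> Prop) (HR : preorder_on R) a b :
  cls R a = cls R b -> R a b /\ R b a.
Proof.
  intro E. assert (H : cls R b b) by (split; apply (po_refl HR)).
  rewrite <- E in H. exact H.
Qed.

Definition quotS (A : SPos Xi) (R : A -> A -> Prop) (HR : preorder_on R) : SPos Xi.
Proof.
  refine {| car := {p : Xi * (A -> Prop) | exists a, srt A a = fst p /\ snd p = cls R a};
            srt := fun p => fst (proj1_sig p);
            le := fun p q => exists a b, snd (proj1_sig p) = cls R a /\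
                                   snd (proj1_sig q) = cls R b /\ R a b |}.
  - intros [p Hp]; pose proof Hp as [a [_ H]]; exists a, a; simpl; rewrite H; repeat split; apply (po_refl HR).
  - intros [p Hp] [q Hq] [r Hr] [a [b [E1 [E2 R1]]]] [b' [c [E3 [E4 R2]]]]; simpl in *.
    exists a, c; repeat split; auto.
    rewrite E2 in E3. destruct (cls_eq HR E3) as [Hbb' _].
    eapply (po_trans HR); [exact R1|]. eapply (po_trans HR); eauto.
  - intros [[x P] HP] [[y Q] HQ] [a [b [E1 [E2 R1]]]] [b' [a' [E3 [E4 R2]]]];
    apply sig_eq; simpl in *.
    destruct HP as [a0 [Ea0 EP]]; destruct HQ as [b0 [Eb0 EQ]]; simpl in *.
    subst P Q. pose proof (po_trans HR) as T.
    destruct (cls_eq HR E1) as [Ha0a Haa0].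
    destruct (cls_eq HR E2) as [Hb0b Hbb0].
    destruct (cls_eq HR E3) as [Hb0b' Hb'b0].
    destruct (cls_eq HR E4) as [Ha0a' Ha'a0].
    assert (Rab : R a0 b0) by eauto.
    assert (Rba : R b0 a0) by eauto.
    assert (Hxy : x = y) by (rewrite <- Ea0, <- Eb0; apply (po_srt HR); exact Rab).
    assert (E : cls R a0 = cls R b0).
    { apply functional_extensionality; intro z; apply propositional_extensionality;
      unfold cls; split; intros [H1 H2]; split; eauto. }
    rewrite Hxy, E; reflexivity.
  - intros [[x P] [a0 [Ea0 EP]]] [[y Q] [b0 [Eb0 EQ]]] [a [b [E1 [E2 R1]]]]; simpl in *.
    subst P Q.
    destruct (cls_eq HR E1) as [Ha0a _].
    destruct (cls_eq HR E2) as [_ Hbb0].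
    rewrite <- Ea0, <- Eb0. apply (po_srt HR). pose proof (po_trans HR) as T; eauto.
Defined.

Definition quotq (A : SPos Xi) (R : A -> A -> Prop) (HR : preorder_on R)
  : Hom A (quotS HR).
Proof.
  refine {| hfun := fun a => exist _ (srt A a, cls R a) (ex_intro _ a (conj eq_refl eq_refl))
               : quotS HR |}.
  - reflexivity.
  - intros x y H; exists x, y; repeat split; auto. apply (po_le HR), H.
Defined.

Definition congruence_ordering (A : SPos Xi) (pi : M Mo A -> A) (R : A -> A -> Prop) :=
  exists HR : preorder_on R,
    forall s t : M Mo A,
      le _ (Mmap Mo (quotq HR) s) (Mmap Mo (quotq HR) t) -> R (pi s) (pi t).

End Algebras.

Record Alphabet (Xi : Type) := {
  asp :> SPos Xi;
  adisc : forall x y : asp, le asp x y <-> x = y;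
  afin : exists l : list asp, forall x, In x l
}.

Record Family (Xi : Type) (Mo : Monad Xi) := {
  form : Alphabet Xi -> Type;
  fsort : forall S, form S -> Xi;
  sat : forall S : Alphabet Xi, M Mo S -> form S -> Prop;
  lam : forall (S G : Alphabet Xi), Hom S G -> form G -> form S;
  lam_sort : forall (S G : Alphabet Xi) (f : Hom S G) (phi : form G), fsort (lam f phi) = fsort phi;
  lam_sat : forall (S G : Alphabet Xi) (f : Hom S G) (phi : form G) (s : M Mo S),
      sat s (lam f phi) <-> sat (Mmap Mo f s) phi
}.
Arguments form {Xi Mo} _ _.
Arguments fsort {Xi Mo} _ {S} _.
Arguments sat {Xi Mo} _ {S} _ _.

Section Logics.
Variable Xi : Type.
Variable Mo : Monad Xi.
Variable L : Family Mo.

Definition models (S : Alphabet Xi) (phi : form L S) (s : M Mo S) :=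
  srt _ s = fsort L phi /\ sat L s phi.

Definition lattice_closed (S : Alphabet Xi) :=
  (forall xi : Xi, exists phi : form L S, fsort L phi = xi /\ forall s, ~ models phi s) /\
  (forall xi : Xi, exists phi : form L S, fsort L phi = xi /\
      forall s, srt _ s = xi -> models phi s) /\
  (forall phi psi : form L S, fsort L phi = fsort L psi ->
     exists chi : form L S, fsort L chi = fsort L phi /\
       forall s, models chi s <-> models phi s \/ models psi s) /\
  (forall phi psi : form L S, fsort L phi = fsort L psi ->
     exists chi : form L S, fsort L chi = fsort L phi /\
       forall s, models chi s <-> models phi s /\ models psi s).

Definition theory_le (S : Alphabet Xi) (D : form L S -> Prop) (s t : M Mo S) :=
  srt _ s = srt _ t /\
  forall phi, D phi -> fsort L phi = srt _ s -> sat L s phi -> sat L t phi.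

Definition equiv_form (S : Alphabet Xi) (phi psi : form L S) :=
  fsort L phi = fsort L psi /\ forall s, models phi s <-> models psi s.

Definition compositional :=
  forall Phi : forall S : Alphabet Xi, form L S -> Prop,
    (forall S, finite_pred (Phi S)) ->
    exists Delta : forall S : Alphabet Xi, form L S -> Prop,
      (forall S phi, Phi S phi -> Delta S phi) /\
      (forall S (xi : Xi), exists l : list (form L S),
          forall phi, Delta S phi -> fsort L phi = xi ->
            exists psi, In psi l /\ equiv_form phi psi) /\
      (forall S : Alphabet Xi,
          congruence_ordering (flat Mo S) (theory_le (Delta S))).

Definition definable (S : Alphabet Xi) (K : M Mo S -> Prop) :=
  exists phi : form L S, forall s, K s <-> models phi s.

Definition discS (A : SPos Xi) (C : list A) : SPos Xi.
Proof.
  refine {| car := {x : A | In x C}; srt := fun x => srt A (proj1_sig x);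
            le := fun x y => x = y |}; intros; subst; auto.
Defined.

Fixpoint sig_list (T : Type) (l : list T) : list {x : T | In x l} :=
  match l return list {x : T | In x l} with
  | [] => []
  | x :: r => exist _ x (or_introl eq_refl)
      :: map (fun y : {x : T | In x r} => exist (fun z => In z (x :: r))
                 (proj1_sig y) (or_intror (proj2_sig y))) (sig_list r)
  end.

Lemma sig_list_complete (T : Type) (l : list T) (y : {x : T | In x l}) :
  In y (sig_list l).
Proof.
  induction l as [|a r IH]; destruct y as [x H]; [destruct H|].
  simpl. destruct H as [E|H].
  - subst x; left; f_equal; apply proof_irrelevance.
  - right. specialize (IH (exist _ x H)).
    apply (in_map (fun y : {x : T | In x r} => exist (fun z => In z (a :: r))
                 (proj1_sig y) (or_intror (proj2_sig y)))) in IH.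
    simpl in IH. replace (or_intror H) with (or_intror (A := a = x) H) in IH by reflexivity.
    exact IH.
Qed.

Definition discAlph (A : SPos Xi) (C : list A) : Alphabet Xi.
Proof.
  refine {| asp := discS C |}.
  - intros; simpl; tauto.
  - exists (sig_list C); intro x; apply sig_list_complete.
Defined.

Definition iotaH (A : SPos Xi) (C : list A) : Hom (discS C) (subS (fun x => In x C)).
Proof.
  refine {| hfun := fun x : discS C => (x : subS (fun x => In x C)) |}.
  - reflexivity.
  - intros x y E; simpl in E; subst; apply le_refl.
Defined.

Definition definable_ord (A : SPos Xi) (C : list A)
  (K : M Mo (subS (fun x => In x C)) -> Prop) :=
  definable (S := discAlph C) (fun u => K (Mmap Mo (iotaH C) u)).

Definition definably_embedded (A : Alg Mo) (C : list (acar A)) :=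
  forall a : acar A,
    definable_ord (C := C) (fun s => le _ a (api A (Mmap Mo (incl _) s))).

Definition L_definable_alg (A : Alg Mo) :=
  finitary A /\ forall C : list (acar A), definably_embedded C.

End Logics.

(* Main.v *)
Require Import Defs.
From Stdlib Require Import Lia Arith List Classical FunctionalExtensionality ProofIrrelevance ClassicalEpsilon.
Import ListNotations.

Lemma Hom_ext {Xi} {A B : SPos Xi} (F G : Hom A B) : (forall x, F x = G x) -> F = G.
Proof.
  destruct F as [f fs fm], G as [g gs gm]; simpl; intro E.
  assert (f = g) by (apply functional_extensionality; exact E). subst g.
  f_equal; apply proof_irrelevance.
Qed.

Lemma Mmap_ext {Xi} (Mo : Monad Xi) {A B : SPos Xi} (F G : Hom A B) :
  (forall x, F x = G x) -> forall s, Mmap Mo F s = Mmap Mo G s.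
Proof. intros E s; rewrite (Hom_ext F G E); reflexivity. Qed.

Lemma Mmap_comp_ext {Xi} (Mo : Monad Xi) {A B C : SPos Xi} (F : Hom A C) (g : Hom B C) (f : Hom A B) :
  (forall x, F x = g (f x)) -> forall s, Mmap Mo F s = Mmap Mo g (Mmap Mo f s).
Proof. intros E s; rewrite <- Mmap_comp; apply Mmap_ext; exact E. Qed.

Section Gen.
Variable Xi : Type.
Variable Mo : Monad Xi.
Variable L : Family Mo.
Hypothesis LC : forall S : Alphabet Xi, lattice_closed L S.

Lemma def_ext (S : Alphabet Xi) (K K' : M Mo S -> Prop) :
  definable L K -> (forall s, K s <-> K' s) -> definable L K'.
Proof. intros [phi H] E; exists phi; intro s; rewrite <- E; apply H. Qed.

Lemma def_empty (S : Alphabet Xi) (xi : Xi) : definable L (S:=S) (fun _ => False).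
Proof.
  destruct (LC S) as [H _]. destruct (H xi) as [phi [_ H2]].
  exists phi; intro s; split; [tauto| apply H2].
Qed.

Lemma def_full (S : Alphabet Xi) (xi : Xi) : definable L (S:=S) (fun s => srt _ s = xi).
Proof.
  destruct (LC S) as [_ [H _]]. destruct (H xi) as [phi [E H2]].
  exists phi; intro s; split; [apply H2|]. intros [H3 _]; congruence.
Qed.

Lemma def_sorted (S : Alphabet Xi) (K : M Mo S -> Prop) xi :
  definable L K -> (forall s, K s -> srt _ s = xi) ->
  exists phi, fsort L phi = xi /\ forall s, K s <-> models phi s.
Proof.
  intros [phi H] Hs.
  destruct (classic (exists s, K s)) as [[s Ks]|NE].
  - exists phi; split; auto. destruct (proj1 (H s) Ks) as [E _].
    rewrite <- E; apply Hs, Ks.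
  - destruct (LC S) as [H0 _]. destruct (H0 xi) as [psi [E H2]].
    exists psi; split; auto. intro s; split; intro X.
    + exfalso; apply NE; eauto.
    + exfalso; eapply H2; eauto.
Qed.

Lemma def_union (S : Alphabet Xi) (K1 K2 : M Mo S -> Prop) xi :
  definable L K1 -> definable L K2 ->
  (forall s, K1 s -> srt _ s = xi) -> (forall s, K2 s -> srt _ s = xi) ->
  definable L (fun s => K1 s \/ K2 s).
Proof.
  intros D1 D2 H1 H2.
  destruct (@def_sorted S K1 xi D1 H1) as [p1 [E1 F1]].
  destruct (@def_sorted S K2 xi D2 H2) as [p2 [E2 F2]].
  destruct (LC S) as [_ [_ [U _]]].
  destruct (U p1 p2 ltac:(congruence)) as [chi [_ Hc]].
  exists chi; intro s; rewrite Hc, F1, F2; tauto.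
Qed.

Lemma def_inter (S : Alphabet Xi) (K1 K2 : M Mo S -> Prop) xi :
  definable L K1 -> definable L K2 ->
  (forall s, K1 s -> srt _ s = xi) ->
  definable L (fun s => K1 s /\ K2 s).
Proof.
  intros D1 [p2 F2] H1.
  destruct (@def_sorted S K1 xi D1 H1) as [p1 [E1 F1]].
  destruct (classic (fsort L p2 = xi)) as [E2|NE].
  - destruct (LC S) as [_ [_ [_ I]]].
    destruct (I p1 p2 ltac:(congruence)) as [chi [_ Hc]].
    exists chi; intro s; rewrite Hc, F1, F2; tauto.
  - apply def_ext with (K := fun _ => False); [apply (def_empty S xi)|].
    intro s; split; [tauto|]. intros [A B]. apply H1 in A.
    apply F2 in B; destruct B as [B _]. congruence.
Qed.

Lemma def_preim (S G : Alphabet Xi) (f : Hom S G) (K : M Mo G -> Prop) :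
  definable L K -> definable L (fun s => K (Mmap Mo f s)).
Proof.
  intros [phi H]. exists (lam f phi). intro s. rewrite H.
  unfold models. rewrite (lam_sat (f0:=L)), (lam_sort (f0:=L)), (hsrt (Mmap Mo f)). tauto.
Qed.

Lemma def_list_union (S : Alphabet Xi) xi (T : Type) (l : list T) (P : T -> M Mo S -> Prop) :
  (forall t, In t l -> definable L (P t)) -> (forall t s, In t l -> P t s -> srt _ s = xi) ->
  definable L (fun s => exists t, In t l /\ P t s).
Proof.
  induction l as [|t l IH]; intros HD HS.
  - apply def_ext with (K := fun _ => False); [apply (def_empty S xi)|].
    intro s; split; [tauto|]. intros [t [[] _]].
  - apply def_ext with (K := fun s => P t s \/ exists t, In t l /\ P t s).
    + apply def_union with xi.
      * apply HD; left; auto.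
      * apply IH; intros; [apply HD|eapply HS]; simpl; eauto.
      * intros; eapply HS; simpl; eauto.
      * intros s [t' [I X]]; eapply HS; simpl; eauto.
    + intro s; simpl; split.
      * intros [X|[t' [I X]]]; eauto.
      * intros [t' [[E|I] X]]; [subst; auto|eauto].
Qed.

Lemma def_finite_union (S : Alphabet Xi) xi (T : Type) (U : T -> Prop) (P : T -> M Mo S -> Prop) :
  finite_pred U -> (forall t, U t -> definable L (P t)) -> (forall t s, U t -> P t s -> srt _ s = xi) ->
  definable L (fun s => exists t, U t /\ P t s).
Proof.
  intros [l Hl] HD HS.
  apply def_ext with (K := fun s => exists t, In t l /\ (U t /\ P t s)).
  - apply def_list_union with xi.
    + intros t _. destruct (classic (U t)) as [Ut|NU].
      * apply def_ext with (K := P t); [auto|]. tauto.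
      * apply def_ext with (K := fun _ => False); [apply (def_empty S xi)|]. tauto.
    + intros t s _ [Ut X]; eauto.
  - intro s; split; [intros [t [_ X]]; eauto|intros [t X]; exists t; split; [apply Hl|]; tauto].
Qed.


Lemma def_fin_inter (S : Alphabet Xi) n (P : {i|i<n} -> M Mo S -> Prop) xi :
  (forall i, definable L (P i)) -> definable L (fun s => srt _ s = xi /\ forall i, P i s).
Proof.
  intro HD.
  assert (G : forall m, m <= n -> definable L (fun s => srt _ s = xi /\ forall i, proj1_sig i < m -> P i s)).
  { induction m; intro Hm.
    - apply def_ext with (K := fun s => srt _ s = xi); [apply def_full|].
      intro s; split; [intros; split; auto; intros i Hi; inversion Hi | tauto].
    - set (i0 := exist (fun i => i < n) m Hm : {i|i<n}).
      apply def_ext with (K := fun s => (srt _ s = xi /\ forall i, proj1_sig i < m -> P i s) /\ P i0 s).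
      + apply (@def_inter S _ _ xi); [apply IHm; lia | apply HD | tauto].
      + intro s; split.
        * intros [[E F] X]; split; auto. intros [i Hi] Hlt. simpl in Hlt.
          destruct (Nat.eq_dec i m).
          -- subst. replace Hi with Hm by apply proof_irrelevance. exact X.
          -- apply F; simpl; lia.
        * intros [E F]; split; [split; auto; intros i Hi; apply F; lia | apply F; simpl; lia]. }
  apply def_ext with (K := fun s => srt _ s = xi /\ forall i, proj1_sig i < n -> P i s); [apply G; auto|].
  intro s; split; intros [E F]; split; auto; intros i; [apply F; apply proj2_sig].
  all: intros; apply F.
Qed.

Lemma emb_union (A : Alg Mo) (C : list (acar A)) (U : acar A -> Prop) xi :
  definably_embedded L C -> finite_pred U -> (forall a, U a -> srt _ a = xi) ->
  definable L (S := discAlph C)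
    (fun t => exists a, U a /\ le _ a (api A (Mmap Mo (Defs.incl _) (Mmap Mo (iotaH C) t)))).
Proof.
  intros DE FU SU. apply (@def_finite_union (discAlph C) xi); auto.
  - intros a _. exact (DE a).
  - intros a t Ua H. apply le_srt in H.
    rewrite (hsrt (api A)), (hsrt (Mmap Mo _)) in H. simpl in H. rewrite (hsrt (Mmap Mo _)) in H.
    etransitivity; [symmetry; exact H|auto].
Qed.

Lemma quot_case (A B : Alg Mo) : L_definable_alg L A -> quotient_of B A -> L_definable_alg L B.
Proof.
  intros [[FS [CA HCA]] DA] [h [Hm Hs]].
  assert (pre: exists pre : acar B -> acar A, forall y, h (pre y) = y).
  { exists (fun y => proj1_sig (constructive_indefinite_description _ (Hs y))).
    intro y; exact (proj2_sig (constructive_indefinite_description _ (Hs y))). }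
  destruct pre as [pre Hpre].
  split; [split|].
  - intro xi. destruct (FS xi) as [l Hl]. exists (map h l). intros b Hb.
    rewrite <- (Hpre b). apply in_map, Hl. rewrite <- (hsrt h), Hpre; auto.
  - exists (map h CA). intro b. destruct (HCA (pre b)) as [s Es].
    unshelve eset (k := _ : Hom (subS (fun x => In x CA)) (subS (fun x => In x (map h CA)))).
    { refine {| hfun := fun x : subS (fun x => In x CA) => (exist _ (h (proj1_sig x)) (in_map h _ _ (proj2_sig x)) : subS (fun y => In y (map h CA))) |}.
      - intro x; simpl; apply (hsrt h).
      - intros x y H; simpl; apply (hmono h), H. }
    exists (Mmap Mo k s).
    assert (E : Mmap Mo (Defs.incl _) (Mmap Mo k s) = Mmap Mo h (Mmap Mo (Defs.incl _) s)).
    { rewrite <- !Mmap_comp. apply Mmap_ext. intro; reflexivity. }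
    rewrite E, <- Hm, Es; apply Hpre.
  - intros C b.
    set (C' := map pre C).
    unshelve eset (g := _ : Hom (discS C) (discS C')).
    { refine {| hfun := fun x : discS C => (exist _ (pre (proj1_sig x)) (in_map pre _ _ (proj2_sig x)) : discS C') |}.
      - intro x; simpl. rewrite <- (hsrt h (pre _)), Hpre; reflexivity.
      - intros x y E; simpl in E; subst; apply le_refl. }
    unfold definably_embedded, definable_ord.
    apply def_ext with (K := fun s => (fun t => exists a, (srt _ a = srt _ b /\ le _ b (h a)) /\
        le _ a (api A (Mmap Mo (Defs.incl _) (Mmap Mo (iotaH C') t)))) (Mmap Mo (A := discAlph C) (B := discAlph C') g s)).
    + refine (@def_preim (discAlph C) (discAlph C') g (fun t => exists a, (srt _ a = srt _ b /\ le _ b (h a)) /\ le _ a (api A (Mmap Mo (Defs.incl _) (Mmap Mo (iotaH C') t)))) _). apply emb_union with (srt _ b); [apply DA | | tauto].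
      destruct (FS (srt _ b)) as [l Hl]. exists l; intros x [X _]; auto.
    + intro s. cbv beta.
      assert (E: Mmap Mo (Defs.incl _) (Mmap Mo (iotaH C) s) =
                 Mmap Mo h (Mmap Mo (Defs.incl _) (Mmap Mo (iotaH C') (Mmap Mo (A := discAlph C) (B := discAlph C') g s)))).
      { rewrite <- !Mmap_comp. apply Mmap_ext. intro x; simpl. symmetry; apply Hpre. }
      rewrite E, <- Hm. split.
      * intros [a [[Sa Ha] Ha']]. eapply le_trans; [exact Ha|]. apply hmono, Ha'.
      * intro H; eexists; split; [split|apply le_refl]; [|exact H].
        apply le_srt in H. rewrite (hsrt h) in H. auto.
Qed.


Lemma prod_case (B : Alg Mo) n (A : {i|i<n} -> Alg Mo) :
  (forall i, L_definable_alg L (A i)) -> embeds_in_product B A -> finitary B -> L_definable_alg L B.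
Proof.
  intros DA [h [Hm [Hi Hr]]] FB. split; auto. intros C b.
  unfold definably_embedded, definable_ord.
  set (pj := fun i => projS (fun i => acar (A i)) i).
  set (Ci := fun i => map (fun c => pj i (h c)) C).
  unshelve eset (g := fun i => _ : Hom (discS C) (discS (Ci i))).
  { refine {| hfun := fun x : discS C => (exist _ (pj i (h (proj1_sig x))) (in_map (fun c => pj i (h c)) _ _ (proj2_sig x)) : discS (Ci i)) |}.
    - intro x. exact (eq_trans (hsrt (pj i) (h (proj1_sig x))) (hsrt h (proj1_sig x))).
    - intros x y E; simpl in E; subst; apply le_refl. }
  apply def_ext with (K := fun s => srt _ s = srt _ b /\ forall i,
     (fun t => le _ (pj i (h b)) (api (A i) (Mmap Mo (Defs.incl _) (Mmap Mo (iotaH (Ci i)) t))))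
       (Mmap Mo (A := discAlph C) (B := discAlph (Ci i)) (g i) s)).
  - apply def_fin_inter. intro i.
    refine (@def_preim (discAlph C) (discAlph (Ci i)) (g i) (fun t => le _ (pj i (h b)) (api (A i) (Mmap Mo (Defs.incl _) (Mmap Mo (iotaH (Ci i)) t)))) _).
    apply (proj2 (DA i)).
  - intro s.
    assert (E: forall i, Mmap Mo (Defs.incl _) (Mmap Mo (iotaH (Ci i)) (Mmap Mo (A := discAlph C) (B := discAlph (Ci i)) (g i) s)) =
       Mmap Mo (pj i) (Mmap Mo h (Mmap Mo (Defs.incl _) (Mmap Mo (iotaH C) s)))).
    { intro i. rewrite <- !Mmap_comp. apply Mmap_ext. intro x; reflexivity. }
    set (y := Mmap Mo (Defs.incl _) (Mmap Mo (iotaH C) s)).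
    assert (Sy : srt _ y = srt _ s).
    { unfold y. exact (eq_trans (hsrt (Mmap Mo _) _) (hsrt (Mmap Mo (iotaH C)) s)). }
    split.
    + intros [Ss F]. apply Hr. rewrite Hm. split.
      * change (srt _ (h b) = srt _ (Mmap Mo h y)). rewrite (hsrt h), (hsrt (Mmap Mo h)), Sy. auto.
      * intro i. specialize (F i). cbv beta in F. rewrite E in F. exact F.
    + intro H. pose proof (le_srt H) as Ss. apply (hmono h) in H. rewrite Hm in H.
      destruct H as [_ F]. split.
      * rewrite (hsrt (api B)), Sy in Ss. auto.
      * intro i. cbv beta. rewrite E. exact (F i).
Qed.


Lemma acc_case (B : Alg Mo) :
  finitary B -> sort_accumulation_point B (L_definable_alg L) -> L_definable_alg L B.
Proof.
  intros FB SAP. split; auto. intros C b.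
  set (D := fun x => x = srt _ b \/ exists c, In c C /\ srt _ c = x).
  destruct (SAP D) as [A [[[FSA _] DA] [h [Hs Hm]]]].
  { exists (srt _ b :: map (srt _) C). intros x [E|[c [I E]]]; [left; auto|right; subst; apply in_map; auto]. }
  assert (pre: exists pre : restrS (acar B) D -> restrS (acar A) D, forall y, h (pre y) = y).
  { exists (fun y => proj1_sig (constructive_indefinite_description _ (Hs y))).
    intro y; exact (proj2_sig (constructive_indefinite_description _ (Hs y))). }
  destruct pre as [pre Hpre].
  set (e := fun x : discS C => (exist _ (proj1_sig x) (or_intror (ex_intro _ (proj1_sig x) (conj (proj2_sig x) eq_refl))) : restrS (acar B) D)).
  unshelve eset (g0 := _ : Hom (discS C) (restrS (acar A) D)).
  { refine {| hfun := fun x : discS C => pre (e x) |}.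
    - intro x. rewrite <- (hsrt h (pre (e x))), Hpre. reflexivity.
    - intros x y E; simpl in E; subst; apply le_refl. }
  set (C' := map (fun x => proj1_sig (pre (e x))) (sig_list C)).
  unshelve eset (g := _ : Hom (discS C) (discS C')).
  { refine {| hfun := fun x : discS C => (exist _ (proj1_sig (pre (e x))) (in_map (fun x => proj1_sig (pre (e x))) _ _ (sig_list_complete x)) : discS C') |}.
    - intro x. exact (hsrt g0 x).
    - intros x y E; simpl in E; subst; apply le_refl. }
  unfold definably_embedded, definable_ord.
  apply def_ext with (K := fun s => (fun t => exists a, (srt _ a = srt _ b /\ exists pa : D (srt _ a), le _ b (proj1_sig (h (exist _ a pa)))) /\
        le _ a (api A (Mmap Mo (Defs.incl _) (Mmap Mo (iotaH C') t)))) (Mmap Mo (A := discAlph C) (B := discAlph C') g s)).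
  - refine (@def_preim (discAlph C) (discAlph C') g (fun t => exists a, (srt _ a = srt _ b /\ exists pa : D (srt _ a), le _ b (proj1_sig (h (exist _ a pa)))) /\
        le _ a (api A (Mmap Mo (Defs.incl _) (Mmap Mo (iotaH C') t)))) _).
    apply emb_union with (srt _ b); [apply DA | | tauto].
    destruct (FSA (srt _ b)) as [l Hl]. exists l; intros x [X _]; auto.
  - intro s.
    assert (E1 : Mmap Mo (Defs.incl _) (Mmap Mo (iotaH C') (Mmap Mo (A := discAlph C) (B := discAlph C') g s)) =
                 Mmap Mo (Defs.incl _) (Mmap Mo g0 s)).
    { rewrite <- !Mmap_comp. apply Mmap_ext. intro x; reflexivity. }
    assert (E2 : Mmap Mo (Defs.incl _) (Mmap Mo (iotaH C) s) =
                 Mmap Mo (Defs.incl _) (Mmap Mo h (Mmap Mo g0 s))).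
    { rewrite <- !Mmap_comp. apply Mmap_ext. intro x; simpl. rewrite Hpre. reflexivity. }
    cbv beta. rewrite E1, E2.
    set (s' := Mmap Mo g0 s).
    set (a0 := api A (Mmap Mo (Defs.incl _) s')).
    assert (Sa0 : srt _ a0 = srt _ s').
    { unfold a0. exact (eq_trans (hsrt (api A) _) (hsrt (Mmap Mo _) _)). }
    assert (Hb : srt _ (api B (Mmap Mo (Defs.incl _) (Mmap Mo h s'))) = srt _ s').
    { exact (eq_trans (hsrt (api B) _) (eq_trans (hsrt (Mmap Mo _) _) (hsrt (Mmap Mo h) _))). }
    split.
    + intros [a [[Sa [pa Ha]] Ha']].
      assert (pf : D (srt _ a0)) by (left; rewrite <- (le_srt Ha'); auto).
      assert (Ds : D (srt _ s')) by (rewrite <- Sa0; auto).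
      pose proof (Hm s' Ds (exist _ a0 pf) eq_refl) as HM.
      rewrite <- HM. eapply le_trans; [exact Ha|].
      exact (hmono h (x := exist _ a pa) (y := exist _ a0 pf) Ha').
    + intro H.
      assert (Ss : srt _ s' = srt _ b) by (rewrite <- Hb; symmetry; exact (le_srt H)).
      assert (pf : D (srt _ a0)) by (left; rewrite Sa0; auto).
      assert (Ds : D (srt _ s')) by (rewrite <- Sa0; auto).
      pose proof (Hm s' Ds (exist _ a0 pf) eq_refl) as HM.
      exists a0; split; [split|apply le_refl].
      * congruence.
      * exists pf. rewrite HM. exact H.
Qed.

End Gen.

Theorem proposition9p10 (Xi : Type) (Mo : Monad Xi) (L : Family Mo) :
  compositional L ->
  (forall S : Alphabet Xi, lattice_closed L S) ->
  pseudo_variety (L_definable_alg L).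
Proof.
  intros _ LC. split; [|split; [|split]].
  - intros A [F _]; exact F.
  - intros A B HA HQ. exact (@quot_case Xi Mo L LC A B HA HQ).
  - intros B n A HA HE FB. exact (@prod_case Xi Mo L LC B n A HA HE FB).
  - intros B FB SAP. exact (@acc_case Xi Mo L LC B FB SAP).
Qed.
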